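(* Let $K$ be an oriented Legendrian knot with a front diagram $D$ whose arcs $x_1,\dots,x_n$ (pieces of $D$ from one undercrossing to the next, possibly containing cusps), numbered consecutively along the orientation, give the presentation $\operatorname{GLR}(K)=\langle x_1,\dots,x_n\mid r_1,\dots,r_n\rangle$ with $r_i\colon u^{p_i}d^{q_i}(x_i)\ast^{\varepsilon_i}x_{k_i}=x_{i+1}$ ($x_{n+1}=x_1$). For $N\ge1$, let $S_+^NS_-^N(K)$ be represented by the diagram obtained from $D$ by performing $N$ positive and $N$ negative stabilizations on the arc $x_1$, so that $\operatorname{GLR}(S_+^NS_-^N(K))=\langle x_1,\dots,x_n\mid r_1',r_2,\dots,r_n\rangle$ with $r_1'\colon u^{2N+p_1}d^{2N+q_1}(x_1)\ast^{\varepsilon_1}x_{k_1}=x_2$. Let $(X,\ast,u,d)$ be a finite block GL-rack with diagonal map $\Delta=\alpha_1\cdots\alpha_l$, blocks $A_i=\operatorname{supp}(\alpha_i)$, induced GL-quandle $(\widetilde X=\{a_1,\dots,a_l\},\tilde\ast,\tilde u,\tilde d)$ and projection $\pi$. Then, identifying homomorphisms out of these presented GL-racks with their values on $x_1,\dots,x_n$, $\operatorname{Hom}(\operatorname{GLR}(K),\widetilde X)=\operatorname{Hom}(\operatorname{GLR}(S_+^NS_-^N(K)),\widetilde X)$; that is, for every $\psi\in\operatorname{Hom}(\operatorname{GLR}(K),\widetilde X)$ there is $\psi'\in\operatorname{Hom}(\operatorname{GLR}(S_+^NS_-^N(K)),\widetilde X)$ with $\psi'(x_i)=\psi(x_i)$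 for all $i$ (and conversely). Moreover, if $|\operatorname{Lift}(\psi)|\neq0$, then $|\operatorname{Lift}(\psi')|\neq0$ if and only if $\Delta^{2N}=\operatorname{id}_X$.
   Context: A rack is a set $X$ with a binary operation $\ast$ such that for every $y\in X$ the map $x\mapsto x\ast y$ is a bijection of $X$ (inverse written $x\mapsto x\ast^{-1}y$; $\ast^{+1}=\ast$) and $(x\ast y)\ast z=(x\ast z)\ast(y\ast z)$ for all $x,y,z$. A GL-rack is a quadruple $(X,\ast,u,d)$ where $(X,\ast)$ is a rack and $u,d\colon X\to X$ are maps such that for all $x,y\in X$: $u(d(x\ast x))=d(u(x\ast x))=x$; $u(x\ast y)=u(x)\ast y$ and $d(x\ast y)=d(x)\ast y$; $x\ast u(y)=x\ast d(y)=x\ast y$ (one has $ud=du$). A GL-quandle is a GL-rack with $x\ast x=x$. Homomorphisms preserve $\ast,u,d$. The diagonal map is $\Delta(x)=x\ast x$; for finite $X$ it is a bijection with $\Delta=(u\circ d)^{-1}$. A finite GL-rack is a block GL-rack if all cycles in the disjoint cycle decomposition $\Delta=\alpha_1\cdots\alpha_l$ (fixed points counted as $1$-cycles) have the same length; the blocks are $A_i=\operatorname{supp}(\alpha_i)$. The induced GL-quandle is $\widetilde X=\{a_1,\dots,a_l\}$ with $\pi\colon X\to\widetilde X$, $\pi(A_i)=\{a_i\}$, $a_i\tilde\ast a_j=\pi(A_i\ast A_j)$, $\tilde u(a_i)=\pi(u(A_i))$, $\tilde d(a_i)=\pi(d(A_i))$ (well defined). For $\psi$ a homomorphism from a fundamental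 GL-rack $G$ to $\widetilde X$, $\operatorname{Lift}(\psi)=\{\phi\in\operatorname{Hom}(G,X):\pi\circ\phi=\psi\}$. Legendrian knots lie in $(\mathbb{R}^3,\xi_{\mathrm{std}})$ and are represented by oriented front diagrams; positive/negative stabilization $S_\pm$ inserts a zigzag ($S_+$ adds two cusps traversed downward, $S_-$ two cusps traversed upward). The fundamental GL-rack $\operatorname{GLR}(K)$ is presented by the arcs of a front diagram with the relations $r_i$ above, where $p_i$ (resp. $q_i$) is the number of cusps traversed upward (resp. downward) on the arc $x_i$, $x_{k_i}$ is the over-arc at the undercrossing ending $x_i$, and $\varepsilon_i=\pm1$ its sign; this is a Legendrian isotopy invariant. *)

(* Defs.v *)
From mathcomp Require Import all_boot.
Set Implicit Arguments. Unset Strict Implicit. Unset Printing Implicit Defensive.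

Record is_GLrack (X : Type) (op : X -> X -> X) (u d : X -> X) : Prop := {
  rack_bij : forall y, bijective (fun x => op x y);
  rack_dist : forall x y z, op (op x y) z = op (op x z) (op y z);
  gl_ud : forall x, u (d (op x x)) = x;
  gl_du : forall x, d (u (op x x)) = x;
  gl_u_op : forall x y, u (op x y) = op (u x) y;
  gl_d_op : forall x y, d (op x y) = op (d x) y;
  gl_op_u : forall x y, op x (u y) = op x y;
  gl_op_d : forall x y, op x (d y) = op x y }.

Definition diag (X : Type) (op : X -> X -> X) : X -> X := fun x => op x x.

(* block GL-rack: all cycles of Delta have the same length *)
Definition is_block (X : finType) (op : X -> X -> X) : Prop :=
  forall x y : X, order (diag op) x = order (diag op) y.

(* (Xt, opt, ut, dt) with projection pi is the induced GL-quandle of X: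
   the points of Xt are (in bijection with) the blocks = Delta-cycles of X,
   pi sends each block to its point, and the operations are induced:
   a_i ~* a_j = pi(A_i * A_j), ut(a_i) = pi(u(A_i)), dt(a_i) = pi(d(A_i)). *)
Record is_induced_GLquandle (X : finType) (op : X -> X -> X) (u d : X -> X)
    (Xt : finType) (opt : Xt -> Xt -> Xt) (ut dt : Xt -> Xt) (pi : X -> Xt)
    : Prop := {
  ind_surj : forall a : Xt, exists x : X, pi x = a;
  ind_blocks : forall x y : X, pi x = pi y <-> fconnect (diag op) x y;
  ind_op : forall x y : X, pi (op x y) = opt (pi x) (pi y);
  ind_u : forall x : X, pi (u x) = ut (pi x);
  ind_d : forall x : X, pi (d x) = dt (pi x) }.

(* Arcs x_1..x_n are indexed by 'I_n (x_1 is index 0), ordS i is the next arc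
   (cyclically).  Relation r_i :  u^(p i) d^(q i) (x_i) *^(eps i) x_(k i) = x_(i+1),
   where eps i = true means exponent +1 and false means -1.  The relation
   w *^-1 y = z is written in the equivalent form w = z * y. *)
Definition rel_holds (T : eqType) (op : T -> T -> T) (u d : T -> T) (n : nat)
    (p q : 'I_n -> nat) (eps : 'I_n -> bool) (k : 'I_n -> 'I_n)
    (f : 'I_n -> T) (i : 'I_n) : bool :=
  let w := iter (p i) u (iter (q i) d (f i)) in
  if eps i then op w (f (k i)) == f (ordS i) else w == op (f (ordS i)) (f (k i)).

Definition homs (T : finType) (op : T -> T -> T) (u d : T -> T) (n : nat)
    (p q : 'I_n -> nat) (eps : 'I_n -> bool) (k : 'I_n -> 'I_n)
    : {set {ffun 'I_n -> T}} :=
  [set f : {ffun 'I_n -> T} | [forall i, rel_holds op u d p q eps k f i]].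

Definition lifts (X Xt : finType) (op : X -> X -> X) (u d : X -> X) (pi : X -> Xt)
    (n : nat) (p q : 'I_n -> nat) (eps : 'I_n -> bool) (k : 'I_n -> 'I_n)
    (psi : {ffun 'I_n -> Xt}) : {set {ffun 'I_n -> X}} :=
  [set phi in homs op u d p q eps k | [forall i, pi (phi i) == psi i]].

Definition stab_counts (n : nat) (i1 : 'I_n) (N : nat) (c : 'I_n -> nat) : 'I_n -> nat :=
  fun i => if i == i1 then 2 * N + c i else c i.

(* Main.v *)
Require Import Defs.
From mathcomp Require Import all_boot.
Set Implicit Arguments. Unset Strict Implicit.

Lemma iter_comm1 (T : Type) (f g : T -> T) :
  (forall y, f (g y) = g (f y)) -> forall b y, f (iter b g y) = iter b g (f y).
Proof. by move=> H; elim=> [|b IH] y //=; rewrite H IH. Qed.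

Lemma iter_comm (T : Type) (f g : T -> T) :
  (forall y, f (g y) = g (f y)) -> forall a b y, iter a f (iter b g y) = iter b g (iter a f y).
Proof.
move=> H; elim=> [|a IH] b y //=; by rewrite IH (iter_comm1 H).
Qed.

Lemma iter_cancel (T : Type) (f g : T -> T) :
  (forall y, f (g y) = y) -> forall j y, iter j f (iter j g y) = y.
Proof. by move=> H; elim=> [|j IH] y //; rewrite iterSr [iter j.+1 g y]iterS H IH. Qed.

Lemma iter_comp (T : Type) (f g : T -> T) :
  (forall y, f (g y) = g (f y)) -> forall j y, iter j f (iter j g y) = iter j (fun z => f (g z)) y.
Proof.
move=> H; elim=> [|j IH] y //.
by rewrite !iterS -(iter_comm1 (fun y => esym (H y))) IH.
Qed.

Lemma iter_mul_order (T : finType) (f : T -> T) : injective f ->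
  forall j x, iter (j * order f x) f x = x.
Proof.
move=> Hf; elim=> [|j IH] x //=; by rewrite mulSn iterD IH iter_order.
Qed.

Lemma iter_mod_order (T : finType) (f : T -> T) : injective f ->
  forall a x, iter a f x = iter (a %% order f x) f x.
Proof.
move=> Hf a x; by rewrite {1}(divn_eq a (order f x)) addnC iterD iter_mul_order.
Qed.

Lemma findex_iter_mod (T : finType) (f : T -> T) : injective f ->
  forall a x, findex f x (iter a f x) = a %% order f x.
Proof.
move=> Hf a x; rewrite (iter_mod_order Hf) findex_iter //.
by rewrite ltn_pmod // order_gt0.
Qed.

Theorem lemma4p3
    (X : finType) (op : X -> X -> X) (u d : X -> X)
    (HX : is_GLrack op u d) (Hblock : is_block op)
    (Xt : finType) (opt : Xt -> Xt -> Xt) (ut dt : Xt -> Xt) (pi : X -> Xt)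
    (Hind : is_induced_GLquandle op u d opt ut dt pi)
    (n : nat) (n_gt0 : 0 < n)
    (p q : 'I_n -> nat) (eps : 'I_n -> bool) (k : 'I_n -> 'I_n)
    (N : nat) (N_gt0 : 0 < N) :
  let i1 := Ordinal n_gt0 in
  let p' := stab_counts i1 N p in
  let q' := stab_counts i1 N q in
  homs opt ut dt p q eps k = homs opt ut dt p' q' eps k /\
  (forall psi : {ffun 'I_n -> Xt},
     psi \in homs opt ut dt p q eps k ->
     #|lifts op u d pi p q eps k psi| != 0 ->
     (#|lifts op u d pi p' q' eps k psi| != 0 <-> iter (2 * N) (diag op) =1 id)).
Proof.
move=> i1 p' q'.
case: HX => Hbij Hdist Hud Hdu Huop Hdop Hopu Hopd.
case: Hind => Hsurj Hblk Hiop Hiu Hid.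
set D := diag op.
have udD : forall x, u (d (D x)) = x by [].
have Dinj : injective D by apply: (@can_inj _ _ D (fun z => u (d z)) udD).
have [Di DK DiK] := injF_bij Dinj.
have Dud : forall y, D (u (d y)) = y.
  by move=> y; rewrite -{1}[y]DiK udD.
have duu : forall y, d (u y) = u (d y).
  move=> y; rewrite -{1}[y]DiK -[X in u (d X)]DiK.
  by rewrite /D /diag Hdu Hud.
have pifix : forall x, pi (D x) = pi x.
  by move=> x; apply/Hblk; rewrite (fconnect_sym Dinj); apply: fconnect1.
have optid : forall a, opt a a = a.
  by move=> a; case: (Hsurj a) => x <-; rewrite -Hiop pifix.
have utdt : forall a, ut (dt a) = a.
  move=> a; case: (Hsurj a) => x <-.
  by rewrite -{2}(Hud x) Hiu Hid Hiop optid.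
split.
  apply/setP => f; rewrite !inE; apply: eq_forallb => i.
  rewrite /rel_holds /p' /q' /stab_counts; case: (i == i1) => //.
  set M := 2 * N; rewrite [M + p i]addnC [iter (p i + M) _ _]iterD [iter (M + q i) _ _]iterD (iter_cancel utdt) //.
move=> psi _.
rewrite !cards_eq0 => /set0Pn [phi]; rewrite inE => /andP [].
rewrite inE => /forallP Hphi /forallP Hpsi.
have DopR : forall j x y, op x (iter j D y) = op x y.
  have opD : forall x w, op x (D w) = op x w.
    move=> x w; case: (Hbij w) => g gK Kg.
    by rewrite -[x](Kg x) /D /diag -Hdist.
  move=> j x y; elim: j => [|j IH] //=.
  by rewrite opD IH.
have DopL : forall j x y, op (iter j D x) y = iter j D (op x y).
  have DL1 : forall w y, op (D w) y = D (op w y) by move=> w y'; rewrite /D /diag Hdist.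
  move=> j x y; elim: j => [|j IH] //=; by rewrite DL1 IH.
have udop : forall j x y, op (iter j (fun z => u (d z)) x) y = iter j (fun z => u (d z)) (op x y).
  move=> j x y; elim: j => [|j IH] //=; by rewrite -IH Hdop Huop.
have uD : forall y, u (D y) = D (u y).
  by move=> y; rewrite /D /diag Huop Hopu.
have dD : forall y, d (D y) = D (d y).
  by move=> y; rewrite /D /diag Hdop Hopd.
have ud_comm : forall y, u (d y) = d (u y) by move=> y; rewrite duu.
set c := fun i : 'I_n => if i == i1 then 2 * N else 0.
have Hp' : forall i, p' i = c i + p i by move=> i; rewrite /p' /c /stab_counts; case: ifP.
have Hq' : forall i, q' i = c i + q i by move=> i; rewrite /q' /c /stab_counts; case: ifP.
have key : forall i t z, iter (p' i) u (iter (q' i) d (iter t D z)) =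
    iter (c i) (fun z => u (d z)) (iter t D (iter (p i) u (iter (q i) d z))).
  move=> i t z; rewrite Hp' Hq' !iterD (iter_comm ud_comm (p i)) (iter_comp ud_comm).
  by rewrite (iter_comm dD) (iter_comm uD).
split.
- move=> /set0Pn [phi']; rewrite inE => /andP [].
  rewrite inE => /forallP Hphi' /forallP Hpsi'.
  have conn : forall i, fconnect D (phi i) (phi' i).
    by move=> i; apply/Hblk; rewrite (eqP (Hpsi i)) (eqP (Hpsi' i)).
  set t := fun i => findex D (phi i) (phi' i).
  have Ht : forall i, phi' i = iter (t i) D (phi i) by move=> i; rewrite iter_findex.
  set m := order D (phi i1).
  have Hm : forall x, order D x = m by move=> x; apply: Hblock.
  have congr : forall a b z, iter a D z = iter b D z -> a %% m = b %% m.
    by move=> a b z E; rewrite -(Hm z) -!findex_iter_mod // E.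
  have step : forall i, (c i + t (ordS i)) %% m = t i %% m.
    move=> i; have := Hphi i; have := Hphi' i; rewrite /rel_holds.
    rewrite !Ht key.
    case: (eps i) => /eqP E1 /eqP E2.
    + apply: (congr _ _ (phi (ordS i))); rewrite iterD.
      by rewrite -E1 DopR udop DopL E2 (iter_cancel Dud).
    + apply: (congr _ _ (op (phi (ordS i)) (phi (k i)))); rewrite iterD.
      by rewrite -DopL -(DopR (t (k i))) -E1 E2 (iter_cancel Dud).
  have Hsum : (\sum_i (c i + t (ordS i))) %% m = (\sum_i t i) %% m.
    rewrite -modn_summ -[RHS]modn_summ; congr (_ %% m); apply: eq_bigr => i _.
    exact: step.
  have Hre : \sum_i t (ordS i) = \sum_i t i by rewrite [RHS](reindex_inj (@ordS_inj n)).
  move: Hsum; rewrite big_split /= Hre.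
  rewrite (bigD1 i1) //= big1 => [|i /negbTE]; last by rewrite /c => ->.
  rewrite /c eqxx addn0 addnC => /eqP; rewrite -{2}[\sum_i t i]addn0 eqn_modDl mod0n => /eqP H2.
  move=> x; rewrite (iter_mod_order Dinj) Hm H2 //.
- move=> Hid2; apply/set0Pn; exists phi; rewrite inE; apply/andP; split; last first.
    by apply/forallP.
  rewrite inE; apply/forallP => i; have := Hphi i.
  have E : iter (p' i) u (iter (q' i) d (phi i)) = iter (p i) u (iter (q i) d (phi i)).
    rewrite (key i 0 (phi i)) /c; case: (i == i1) => //.
    by rewrite -{1}(Hid2 (iter (p i) u (iter (q i) d (phi i)))) (iter_cancel (f := fun z => u (d z)) (g := D) udD).
  by rewrite /rel_holds E.
Qed.
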